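(* Assume $C\le1$. Let $N,q,L\in\mathbb{N}_{\ge1}$ and $0<\varepsilon\le\frac1{2NL}$ with $$q\ge9\max\{1,A\}\quad\text{and}\quad N\ge\max\Big\{\frac4A,\ \frac{8(n+1)n\cdot2^nDA^{n-1}}{3C^n}\Big\}.$$ If $s\in S=\frac1{NL}\{0,\dots,L-1\}^n$ satisfies $H_{\mathrm{grid}}(\varepsilon)\cap G(s)=\emptyset$, then $$\frac1N\le\frac A4\quad\text{and}\quad\frac{|G(s)\setminus H_{\mathrm{bound}}|}{|G(s)|}\ge1-\frac1{4(n+1)}.$$
   Context: An $n$-dimensional infrastructure consists of a full-rank lattice $\Lambda\subset\mathbb{R}^n$, a finite non-empty set $X$, an injective map $d:X\to\mathbb{R}^n/\Lambda$, and a set $\mathrm{fRep}\subseteq X\times\mathbb{R}^n$ with $X\times\{0\}\subseteq\mathrm{fRep}$ such that $\Phi:\mathrm{fRep}\to\mathbb{R}^n/\Lambda$, $(x,t)\mapsto d(x)+t$, is a bijection. Let $\pi:\mathbb{R}^n\to\mathbb{R}^n/\Lambda$ be the projection, $\hat X=\pi^{-1}(d(X))$, and for $\hat x\in\hat X$ let $\hat V_{\hat x}=\{\hat x+t:(d^{-1}(\pi(\hat x)),t)\in\mathrm{fRep}\}$; these sets partition $\mathbb{R}^n$. Standing assumptions: the infrastructure is cornered (for each $\hat x$, $\hat x\in\hat V_{\hat x}$ and $\{r:\hat x\le r\le t\}\subseteq\hat V_{\hat x}$ for all $t\in\hat V_{\hat x}$, componentwise order); (A1) there is $A>0$ with $\hat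 V_{\hat x}\subseteq\hat x+[0,A]^n$ for all $\hat x$; (A2) there are $C,D>0$ such that $(r+[0,C]^n)\cap\hat X$ has at most $D$ elements for every $r\in\mathbb{R}^n$. $G(s)=\{s+\frac1Nv:v\in\{0,\dots,qN-1\}^n\}$. $H=\bigcup_{\hat x}\partial\hat V_{\hat x}$ (topological boundaries), $H_{\mathrm{bound}}=(-\frac1N,0]^n+H$, $\mathbb{N}=\{0,1,2,\dots\}$, and $H_{\mathrm{grid}}(\varepsilon)=\bigcup_{\hat x\in\hat X}\big((\frac1N\mathbb{N}^n+\partial\hat V_{\hat x})\cap\overline{\hat V_{\hat x}}\big)+[-\varepsilon,\varepsilon]^n$. *)

(* Defs.v *)
(* R^n is rendered as 'rV[R]_n with its
   canonical (normed) topology; R^n/Lambda is handled through representatives. *)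
From HB Require Import structures.
From mathcomp Require Import all_boot all_order all_algebra.
From mathcomp Require Import all_classical all_reals all_analysis.
Set Implicit Arguments. Unset Strict Implicit. Unset Printing Implicit Defensive.
Import Order.TTheory GRing.Theory Num.Theory.
Import numFieldNormedType.Exports.
Local Open Scope classical_set_scope.
Local Open Scope ring_scope.

Section Infrastructure.
Variables (R : realType) (n : nat).
Local Notation vec := 'rV[R]_n.

(* The lattice Lambda = Z^n B (rows of B are a basis). *)
Definition in_lattice (B : 'M[R]_n) (v : vec) : Prop :=
  exists k : 'I_n -> int, v = (\row_i (k i)%:~R) *m B.

Definition vle (x y : vec) : Prop := forall i, x 0 i <= y 0 i.

Definition boundary (A : set vec) : set vec := closure A `\` interior A.

Variables (X : finType) (B : 'M[R]_n) (d : X -> vec) (fRep : set (X * vec)).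

(* n-dimensional infrastructure: Lambda full rank, X nonempty finite,
   d : X -> R^n/Lambda injective (d given by representatives),
   X x {0} subset of fRep, Phi : (x,t) |-> d(x)+t mod Lambda bijective. *)
Definition is_infrastructure : Prop :=
  [/\ B \in unitmx, (0 < #|X|)%N,
      (forall x y, in_lattice B (d x - d y) -> x = y),
      (forall x, fRep (x, 0)) &
    [/\ 
      (forall p p', fRep p -> fRep p' ->
          in_lattice B ((d p.1 + p.2) - (d p'.1 + p'.2)) -> p = p')
    & (forall y, exists2 p, fRep p & in_lattice B ((d p.1 + p.2) - y))]].

(* \hat X = pi^{-1}(d(X)) *)
Definition Xhat : set vec := [set y | exists x, in_lattice B (y - d x)].

Definition Vhat (xh : vec) : set vec :=
  [set v | exists x t, [/\ in_lattice B (xh - d x), fRep (x, t) & v = xh + t]].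

Definition cornered : Prop :=
  forall xh, Xhat xh ->
    Vhat xh xh /\
    (forall t, Vhat xh t -> forall r, vle xh r -> vle r t -> Vhat xh r).

Definition assumptionA1 (A : R) : Prop :=
  0 < A /\ forall xh, Xhat xh -> forall v, Vhat xh v ->
    forall i, 0 <= v 0 i - xh 0 i <= A.

Definition assumptionA2 (C D : R) : Prop :=
  [/\ 0 < C, 0 < D &
    forall (r : vec) (s : seq vec), uniq s ->
      (forall y, y \in s -> Xhat y /\ forall i, 0 <= y 0 i - r 0 i <= C) ->
      (size s)%:R <= D].

Definition Hset : set vec := \bigcup_(xh in Xhat) boundary (Vhat xh).

Definition Hbound (N : nat) : set vec :=
  [set v | exists (u h : vec), [/\ forall i, - (N%:R)^-1 < u 0 i <= 0, Hset h & v = u + h]].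

Definition Hgrid (N : nat) (eps : R) : set vec :=
  [set v | exists (xh w e : 'rV[R]_n),
     [/\ Xhat xh,
         (exists (m : 'I_n -> nat) b,
             boundary (Vhat xh) b /\ w = (N%:R)^-1 *: (\row_i (m i)%:R) + b),
         closure (Vhat xh) w,
         (forall i, - eps <= e 0 i <= eps) & v = w + e]].

End Infrastructure.

Section Grid.
Variables (R : realType) (n : nat).

Definition gridpt (N q : nat) (s : 'rV[R]_n) (v : {ffun 'I_n -> 'I_(q * N)}) :=
  s + (N%:R)^-1 *: (\row_i ((v i : nat)%:R)).

Definition Gset (N q : nat) (s : 'rV[R]_n) : set 'rV[R]_n :=
  [set y | exists v : {ffun 'I_n -> 'I_(q * N)}, y = gridpt s v].

Definition Gseq (N q : nat) (s : 'rV[R]_n) : seq 'rV[R]_n :=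
  [seq gridpt s v | v <- enum {ffun 'I_n -> 'I_(q * N)}].

Definition cardG (N q : nat) (s : 'rV[R]_n) : nat := size (undup (Gseq N q s)).

Definition cardG_out (P : set 'rV[R]_n) (N q : nat) (s : 'rV[R]_n) : nat :=
  size (undup [seq y <- Gseq N q s | `[< ~ P y >]]).

End Grid.

(* Main.v *)
Require Import Defs.
From HB Require Import structures.
From mathcomp Require Import all_boot all_order all_algebra.
From mathcomp Require Import all_classical all_reals all_analysis.
From mathcomp Require Import ring lra.
Import Order.TTheory GRing.Theory Num.Theory.
Import numFieldNormedType.Exports.
Local Open Scope classical_set_scope.
Local Open Scope ring_scope.

Lemma count_enum_card (T : finType) (p : pred T) : count p (enum T) = #|p|.
Proof.
rewrite cardE -size_filter /enum_mem -filter_predI.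
by congr size; apply: eq_filter => x /=; rewrite andbT.
Qed.

Lemma card_family_prod (n M : nat) (F : 'I_n -> pred 'I_M) :
  #|[pred v : {ffun 'I_n -> 'I_M} | [forall j, F j (v j)]]| = (\prod_(j < n) #|F j|)%N.
Proof.
have -> : (\prod_(j < n) #|F j|)%N = foldr muln 1%N [seq #|F x| | x : 'I_n].
  by rewrite foldrE big_map big_enum.
rewrite -(card_family F).
apply: eq_card => v; rewrite !inE.
by apply: eq_forallb => j.
Qed.

Lemma has_le_sum (T : Type) (s : seq T) (p : pred T) :
  (has p s <= \sum_(u <- s) p u)%N.
Proof.
elim: s => [|x s IH]; first by rewrite big_nil.
rewrite big_cons /=; case: (p x) => //=.
Qed.

Lemma count_has_le (T U : Type) (l : seq T) (s : seq U) (Q : T -> U -> bool) :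
  (count (fun x => has (Q x) s) l <= \sum_(u <- s) count (Q^~ u) l)%N.
Proof.
elim: l => [|x l IH]; first by rewrite big1.
rewrite /= big_split /=; apply: leq_add => //.
exact: has_le_sum.
Qed.

Section Itv.
Variable R : realType.

Lemma card_itv (M Ln : nat) (b L : R) : L <= Ln%:R ->
  (#|[pred k : 'I_M | ((b < (k : nat)%:R)%R && ((k : nat)%:R <= b + L)%R)]| <= Ln)%N.
Proof.
move=> HL.
set c : nat := if 0 <= b then (Num.truncn b).+1 else 0%N.
have cb : b < c%:R.
  rewrite /c; case: ifP => b0; first exact: truncnS_gt.
  by rewrite ltNge b0.
have ck : forall k : nat, b < k%:R -> (c <= k)%N.
  move=> k bk; rewrite /c; case: ifP => b0 //.
  by rewrite (truncn_lt_nat _ b0).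
set A := [pred k : 'I_M | ((b < (k : nat)%:R)%R && ((k : nat)%:R <= b + L)%R)].
case: Ln HL => [|Ln] HL.
  rewrite leqn0; apply/eqP; apply: eq_card0 => k; rewrite !inE.
  apply/negP => /andP[h1 h2]; have := ck _ h1.
  rewrite -(ler_nat R) => h3; lra.
pose f := fun k : 'I_M => (inord (k - c) : 'I_Ln.+1).
have lt : forall k, k \in A -> (k - c < Ln.+1)%N.
  move=> k; rewrite inE => /andP[h1 h2].
  have h3 := ck _ h1.
  rewrite -(ltr_nat R) natrB //.
  lra.
have inj : {in A &, injective f}.
  move=> k k' kA k'A; rewrite /f => /(congr1 (@nat_of_ord _)).
  rewrite !inordK ?lt // => E.
  apply: val_inj => /=.
  have h1 := ck _ (andP kA).1. have h2 := ck _ (andP k'A).1.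
  by rewrite -(subnK h1) -(subnK h2) E.
rewrite -(card_in_imset inj).
apply: leq_trans (max_card _) _; by rewrite card_ord.
Qed.
End Itv.

Section Arith.
Variable R : realType.

Lemma pw (x y : R) k : 0 <= x -> x <= y -> x ^+ k <= y ^+ k.
Proof. move=> x0 xy; apply: lerXn2r; rewrite ?nnegrE //; exact: le_trans xy. Qed.

Lemma final_arith (m : nat) (A C D qr Nr Kr Tr : R) :
  0 < A -> 0 < C -> C <= 1 -> 0 < D ->
  9 * Num.max 1 A <= qr ->
  Num.max (4 / A) (8 * (m.+2)%:R * (m.+1)%:R * 2 ^+ m.+1 * D * A ^+ m / (3 * C ^+ m.+1)) <= Nr ->
  0 <= Kr -> Kr <= (qr + A) / C + 1 -> 0 <= Tr -> Tr <= A * Nr + 2 ->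
  Kr ^+ m.+1 * D * (m.+1)%:R * Tr ^+ m <= (qr * Nr) ^+ m.+1 / (4 * (m.+2)%:R).
Proof.
move=> A0 C0 C1 D0 Hq HN K0 HK T0 HT.
have h1 : 1 <= Num.max 1 A by rewrite le_max lexx.
have h2 : A <= Num.max 1 A by rewrite le_max lexx orbT.
have q9 : 9 <= qr by lra.
have qA : 9 * A <= qr by lra.
move: HN; rewrite ge_max => /andP[HN1 HN2].
have AN4 : 4 <= A * Nr.
  move: HN1; rewrite ler_pdivrMr // mulrC //.
have N0 : 0 < Nr by nra.
set a := A * Nr in AN4 HT.
have Tp : Tr ^+ m <= (3 / 2) ^+ m * A ^+ m * Nr ^+ m.
  rewrite -exprMn -exprMn; apply: pw => //; rewrite -mulrA -/a; lra.
have KC : Kr * C <= 11 / 9 * qr.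
  have E : (qr + A) / C * C = qr + A by rewrite divfK // gt_eqF.
  have : Kr * C <= ((qr + A) / C + 1) * C by rewrite ler_pM2r.
  rewrite mulrDl E mul1r; lra.
have KCp : (Kr * C) ^+ m.+1 <= (11 / 9 * qr) ^+ m.+1.
  by apply: pw => //; apply: mulr_ge0 => //; exact: ltW.
pose c := 8 * (m.+2)%:R * 2 ^+ m.+1 / 3 : R.
have c0 : 0 < c by rewrite /c; apply: divr_gt0 => //; rewrite !mulr_gt0 // ?exprn_gt0 // ltr0n.
pose X := D * (m.+1)%:R * A ^+ m / C ^+ m.+1.
have X0 : 0 <= X.
  rewrite /X; apply: divr_ge0; last by rewrite exprn_ge0 // ltW.
  by rewrite !mulr_ge0 // ?ler0n ?exprn_ge0 // ltW.
have HX : X <= Nr / c.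
  rewrite ler_pdivlMr //; apply: le_trans HN2.
  rewrite /X /c le_eqVlt; apply/orP; left; apply/eqP; field.
  by rewrite expf_neq0 // gt_eqF.
have Nrp : 0 <= Nr ^+ m by rewrite exprn_ge0 // ltW.
have step1 : Kr ^+ m.+1 * D * (m.+1)%:R * Tr ^+ m <=
    Kr ^+ m.+1 * D * (m.+1)%:R * ((3 / 2) ^+ m * A ^+ m * Nr ^+ m).
  apply: ler_wpM2l => //; rewrite !mulr_ge0 // ?ler0n ?exprn_ge0 // ltW //.
apply: le_trans step1 _.
have E2 : Kr ^+ m.+1 * D * (m.+1)%:R * ((3 / 2) ^+ m * A ^+ m * Nr ^+ m)
   = (Kr * C) ^+ m.+1 * ((3 / 2) ^+ m * Nr ^+ m) * X.
  rewrite /X [(Kr * C) ^+ _]exprMn; field; by rewrite expf_neq0 // gt_eqF.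
rewrite E2.
have P0 : 0 <= (3 / 2 : R) ^+ m * Nr ^+ m by apply: mulr_ge0 => //; apply: exprn_ge0; lra.
apply: (@le_trans _ _ ((11 / 9 * qr) ^+ m.+1 * ((3 / 2) ^+ m * Nr ^+ m) * (Nr / c))).
  apply: ler_pM => //.
    by rewrite mulr_ge0 // exprn_ge0 // mulr_ge0 // ltW.
  by apply: ler_wpM2r.
have E3 : (11 / 9 * qr) ^+ m.+1 * ((3 / 2) ^+ m * Nr ^+ m) * (Nr / c)
   = (qr * Nr) ^+ m.+1 / (4 * (m.+2)%:R) * ((11 / 9) ^+ m.+1 * (3 / 2) ^+ m.+1 / 2 ^+ m.+1).
  rewrite /c [(11 / 9 * qr) ^+ _]exprMn [(qr * Nr) ^+ _]exprMn [Nr ^+ m.+1]exprS [(3 / 2) ^+ m.+1]exprS; field.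
  rewrite expf_neq0 //=; apply/negP => /eqP h; have := ler0n R m; lra.
rewrite E3; apply: ler_piMr.
  apply: divr_ge0; first by rewrite exprn_ge0 // mulr_ge0 // ltW; lra.
  by rewrite mulr_ge0 // ler0n.
rewrite -exprMn ler_pdivrMr ?exprn_gt0 // mul1r; apply: pw => //; lra.
Qed.
End Arith.
Section S.
Variable R : realType.
Variable n : nat.
Local Notation vec := 'rV[R]_n.

Lemma box_nbhs (h a b : vec) : (forall j, a 0 j < h 0 j < b 0 j) ->
  nbhs h [set z : vec | forall j, a 0 j < z 0 j < b 0 j].
Proof.
move=> H.
exists (fun i j => `]a 0 j, b 0 j[%classic).
  move=> i j; rewrite (ord1 i).
  apply: open_nbhs_nbhs; split; first exact: itv_open.
  by rewrite /= in_itv /=; exact: H.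
move=> z /= Hz j; have := Hz 0 j; by rewrite /= in_itv.
Qed.

Variables (X : finType) (B : 'M[R]_n) (d : X -> vec) (fRep : set (X * vec)).

Lemma lat_add u v : in_lattice B u -> in_lattice B v -> in_lattice B (u + v).
Proof.
move=> [k1 ->] [k2 ->]; exists (fun i => k1 i + k2 i).
rewrite -mulmxDl; congr (_ *m _); apply/rowP => i; rewrite !mxE.
by rewrite intrD.
Qed.

Lemma lat_opp u : in_lattice B u -> in_lattice B (- u).
Proof.
move=> [k1 ->]; exists (fun i => - k1 i).
rewrite -mulNmx; congr (_ *m _); apply/rowP => i; rewrite !mxE.
by rewrite intrN.
Qed.

Hypothesis infra : is_infrastructure B d fRep.

Lemma V_unique xh yh r : Vhat B d fRep xh r -> Vhat B d fRep yh r -> xh = yh.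
Proof.
case: infra => _ _ _ _ [inj _].
move=> [x1 [t1 [l1 f1 e1]]] [x2 [t2 [l2 f2 e2]]].
have := inj (x1, t1) (x2, t2) f1 f2.
have L : in_lattice B ((d (x1, t1).1 + (x1, t1).2) - (d (x2, t2).1 + (x2, t2).2)).
  have -> : (d (x1, t1).1 + (x1, t1).2) - (d (x2, t2).1 + (x2, t2).2)
     = - (xh - d x1) + (yh - d x2).
    have E1 : t1 = r - xh by rewrite e1 addrAC subrr add0r.
    have E2 : t2 = r - yh by rewrite e2 addrAC subrr add0r.
    rewrite /= E1 E2; apply/rowP => j; rewrite !mxE; ring.
  by apply: lat_add; [apply: lat_opp|].
move=> /(_ L) [E1 E2].
by rewrite -(addrK t1 xh) -e1 E2 e2 addrK.
Qed.

Lemma V_exists t : exists y, Xhat B d y /\ Vhat B d fRep y t.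
Proof.
case: infra => _ _ _ _ [_ surj].
have [p fp lp] := surj t.
exists (t - p.2); split.
  exists p.1.
  have -> : t - p.2 - d p.1 = - (d p.1 + p.2 - t).
    by apply/rowP => j; rewrite !mxE; ring.
  exact: lat_opp.
exists p.1, p.2; split.
- have -> : t - p.2 - d p.1 = - (d p.1 + p.2 - t).
    by apply/rowP => j; rewrite !mxE; ring.
  exact: lat_opp.
- by case: p fp lp.
- by rewrite subrK.
Qed.

Hypothesis corn : cornered B d fRep.

Lemma boundary_face (xh h t y : vec) : Xhat B d xh -> boundary (Vhat B d fRep xh) h ->
  (forall j, h 0 j < t 0 j) -> Xhat B d y -> Vhat B d fRep y t ->
  exists i, h 0 i <= y 0 i.
Proof.
move=> Xx [hcl hint] ht Xy Vyt.
apply: contrapT => Hn.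
have Hlt : forall j, y 0 j < h 0 j.
  by move=> j; rewrite ltNge; apply/negP => hj; apply: Hn; exists j.
have Nb : nbhs h [set z : vec | forall j, y 0 j < z 0 j < t 0 j].
  by apply: box_nbhs => j; rewrite Hlt ht.
have sub : [set z : vec | forall j, y 0 j < z 0 j < t 0 j] `<=` Vhat B d fRep y.
  move=> z Hz; have [_ C] := corn _ Xy; apply: (C t Vyt).
  - by move=> j; have /andP[/ltW ? _] := Hz j.
  - by move=> j; have /andP[_ /ltW ?] := Hz j.
have [r [Vxr Or]] := hcl _ Nb.
have E := V_unique _ _ _ Vxr (sub _ Or).
apply: hint; rewrite E; exact: filterS Nb.
Qed.

Definition meets (N : nat) (A : R) (g y : vec) (i : 'I_n) : Prop :=
  g 0 i <= y 0 i < g 0 i + N%:R^-1 /\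
  forall j, y 0 j < g 0 j + N%:R^-1 /\ g 0 j <= y 0 j + A.

Lemma Hbound_meets (N : nat) (A : R) (g : vec) : (0 < N)%N ->
  assumptionA1 B d fRep A -> Hbound B d fRep N g ->
  exists y, Xhat B d y /\ exists i, meets N A g y i.
Proof.
move=> N0 [A0 A1] [u [h [Hu [xh Xx bd] ->]]].
set e := N%:R^-1 : R.
have e0 : 0 < e by rewrite invr_gt0 ltr0n.
pose t : vec := \row_j ((h 0 j + (u 0 j + h 0 j + e)) / 2).
have ht : forall j, h 0 j < t 0 j /\ t 0 j < u 0 j + h 0 j + e.
  move=> j; rewrite mxE; have := Hu j; rewrite -/e => /andP[H1 H2]; split; lra.
have [y [Xy Vyt]] := V_exists t.
have [i hi] := boundary_face _ _ _ _ Xx bd (fun j => (ht j).1) Xy Vyt.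
exists y; split => //; exists i.
have Hy := A1 _ Xy _ Vyt.
rewrite /meets !mxE.
split.
  have := Hu i; rewrite -/e => /andP[H1 H2].
  have := ht i => -[H3 H4]. have /andP[H5 H6] := Hy i.
  apply/andP; split; lra.
move=> j; rewrite !mxE.
have := Hu j; rewrite -/e => /andP[H1 H2].
have := ht j => -[H3 H4]. have /andP[H5 H6] := Hy j.
split; lra.
Qed.

Section Count.
Variables (A C D : R) (N q : nat) (s : vec).
Hypothesis N1 : (1 <= N)%N.
Hypothesis A1 : assumptionA1 B d fRep A.

Local Notation M := (q * N)%N.
Local Notation F := {ffun 'I_n -> 'I_M}.

Lemma gridE (v : F) j : (gridpt s v) 0 j = s 0 j + (v j : nat)%:R / N%:R.
Proof. by rewrite /gridpt !mxE mulrC. Qed.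

Definition meetsb (v : F) (y : vec) (i : 'I_n) : bool := `[< meets N A (gridpt s v) y i >].

Lemma per_pair (y : vec) (i : 'I_n) :
  (count (fun v => meetsb v y i) (enum F) <=
     \prod_(j < n) (if j == i then 1 else (Num.truncn (A * N%:R)).+2))%N.
Proof.
pose bj := fun j : 'I_n => N%:R * (y 0 j - s 0 j) - 1.
pose Lj := fun j : 'I_n => if j == i then 1 else A * N%:R + 1.
pose Fj := fun j : 'I_n => [pred k : 'I_M | ((bj j < (k : nat)%:R)%R && ((k : nat)%:R <= bj j + Lj j)%R)].
have N0 : (0 : R) < N%:R by rewrite ltr0n.
apply: (@leq_trans (count (fun v : F => [forall j, Fj j (v j)]) (enum F))).
  apply: sub_count => v; rewrite /meetsb => /asboolP [/andP[H1 H2] H3].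
  apply/forallP => j; rewrite /Fj /bj /Lj inE.
  have [H4 H5] := H3 j.
  have E3 : N%:R^-1 * N%:R = (1 : R) by rewrite mulVf // gt_eqF.
  case: eqP => [eji|_].
    subst j.
    rewrite !gridE in H1 H2 H4 H5.
    set k := ((v i : nat)%:R : R) in H1 H2 H4 H5 *.
    have E1 : k / N%:R * N%:R = k by rewrite divfK // gt_eqF.
    apply/andP; split; nra.
  rewrite !gridE in H4 H5.
  set k := ((v j : nat)%:R : R) in H4 H5 *.
  have E1 : k / N%:R * N%:R = k by rewrite divfK // gt_eqF.
  apply/andP; split; nra.
rewrite count_enum_card.
have -> := card_family_prod _ _ Fj.
apply: leq_prod => j _.
rewrite /Fj; apply: card_itv.
rewrite /Lj; case: eqP => _; first by rewrite lexx.
have := truncnS_gt (A * N%:R). rewrite -[(_.+2)%:R]natr1 -[(_.+1)%:R]natr1. lra.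
Qed.


Lemma prod_if (i : 'I_n) (T : nat) :
  (\prod_(j < n) (if j == i then 1 else T) = T ^ n.-1)%N.
Proof.
rewrite (bigD1 i) //= eqxx mul1n.
rewrite (eq_bigr (fun _ => T)); last by move=> j /negbTE ->.
by rewrite prod_nat_const cardC1 card_ord.
Qed.

Lemma sum_const_nat (I : Type) (r : seq I) (c : nat) :
  (\sum_(u <- r) c = size r * c)%N.
Proof. by elim: r => [|x r IH]; rewrite ?big_nil ?big_cons ?IH. Qed.

Lemma sum_const_R (I : Type) (r : seq I) (c : R) :
  \sum_(u <- r) c = (size r)%:R * c.
Proof.
elim: r => [|x r IH]; first by rewrite big_nil mul0r.
by rewrite big_cons IH /= -natr1 mulrDl mul1r addrC.
Qed.

Local Notation T := (Num.truncn (A * N%:R)).+2.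

Definition badb (v : F) : bool := `[< Hbound B d fRep N (gridpt s v) >].
Definition Wset (v : F) := [set y | Xhat B d y /\ exists i, meets N A (gridpt s v) y i].
Definition wit (v : F) : vec := xget 0 (Wset v).

Lemma wit_spec v : badb v -> Wset v (wit v).
Proof.
move=> /asboolP H; apply: xgetPex.
exact: (Hbound_meets _ _ _ N1 A1 H).
Qed.

Definition Ys := undup [seq wit v | v <- enum F & badb v].

Lemma bad_count : (count badb (enum F) <= size Ys * (n * T ^ n.-1))%N.
Proof.
apply: (leq_trans (@sub_count _ _
   (fun v => has (fun y => has (fun i => meetsb v y i) (enum 'I_n)) Ys) _ _)).
  move=> v bv; apply/hasP; exists (wit v).
    rewrite mem_undup; apply/mapP; exists v => //.
    by rewrite mem_filter bv mem_enum.
  have [_ [i mi]] := wit_spec _ bv.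
  by apply/hasP; exists i; [exact: mem_enum | exact/asboolP].
apply: leq_trans (count_has_le _ _ _ _ _) _.
rewrite -sum_const_nat; apply: leq_sum => y _.
apply: leq_trans (count_has_le _ _ _ _ _) _.
apply: (@leq_trans (\sum_(u <- enum 'I_n) T ^ n.-1)).
  apply: leq_sum => i _.
  by rewrite -(prod_if i); exact: per_pair.
by rewrite sum_const_nat -cardE card_ord.
Qed.


Lemma Ys_bound y : y \in Ys -> Xhat B d y /\ forall j, s 0 j - A <= y 0 j < s 0 j + q%:R.
Proof.
rewrite mem_undup => /mapP [v]; rewrite mem_filter => /andP [bv _] ->.
have [Xy [i [_ H]]] := wit_spec _ bv.
split => // j.
have [H4 H5] := H j.
rewrite !gridE in H4 H5.
have N0 : (0 : R) < N%:R by rewrite ltr0n.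
have E3 : N%:R^-1 * N%:R = (1 : R) by rewrite mulVf // gt_eqF.
have hv : ((v j : nat)%:R + 1 <= q%:R * N%:R :> R).
  by rewrite -natrM natr1 ler_nat; apply: ltn_ord.
set k := ((v j : nat)%:R : R) in H4 H5 hv *.
have E1 : k / N%:R * N%:R = k by rewrite divfK // gt_eqF.
have k0 : 0 <= k by rewrite /k ler0n.
have kN : 0 <= k / N%:R by rewrite divr_ge0 // ltW.
apply/andP; split; first lra.
have : k / N%:R + N%:R^-1 <= q%:R.
  nra.
lra.
Qed.

Hypothesis A2 : assumptionA2 B d C D.

Local Notation K := (Num.truncn ((q%:R + A) / C)).+1.
Local Notation Q := {ffun 'I_n -> 'I_K}.

Definition corner (c : Q) : vec := \row_j (s 0 j - A + C * (c j : nat)%:R).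
Definition inCube (c : Q) (y : vec) : bool :=
  `[< forall j, 0 <= y 0 j - corner c 0 j <= C >].

Lemma Ys_cube y : y \in Ys -> has (fun c => inCube c y) (enum Q).
Proof.
move=> /Ys_bound [_ H].
have [C0 _ _] := A2.
have [A0 _] := A1.
pose z := fun j : 'I_n => (y 0 j - s 0 j + A) / C.
have z0 : forall j, 0 <= z j.
  move=> j; have /andP[h1 h2] := H j; rewrite /z divr_ge0 //; [lra | exact: ltW].
have zlt : forall j, (Num.truncn (z j) < K)%N.
  move=> j; rewrite ltnS; apply: le_truncn.
  have /andP[h1 h2] := H j.
  rewrite /z ler_pM2r ?invr_gt0 //; lra.
apply/hasP; exists [ffun j => Ordinal (zlt j)]; first exact: mem_enum.
apply/asboolP => j; rewrite /corner !mxE ffunE /=.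
have /andP[t1 t2] := truncn_itv (z0 j).
have Cz : C * z j = y 0 j - s 0 j + A by rewrite /z mulrC divfK // gt_eqF.
set t := ((Num.truncn (z j))%:R : R) in t1 t2 *.
apply/andP; split; nra.
Qed.

Lemma Ys_size : ((size Ys)%:R <= (K ^ n)%:R * D :> R).
Proof.
have [C0 D0 HA2] := A2.
have H1 : (size Ys <= \sum_(c <- enum Q) count (inCube c) Ys)%N.
  rewrite -count_predT.
  rewrite (@eq_in_count _ _ (fun y => has (fun c => inCube c y) (enum Q))); last first.
    by move=> y yY /=; rewrite Ys_cube.
  exact: (count_has_le _ _ _ _ (fun y c => inCube c y)).
apply: (@le_trans _ _ (\sum_(c <- enum Q) (count (inCube c) Ys)%:R)).
  by rewrite -natr_sum ler_nat.
apply: (@le_trans _ _ (\sum_(c <- enum Q) D)).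
  apply: ler_sum => c _; rewrite -size_filter.
  apply: HA2 (corner c) _ _ _; first by rewrite filter_uniq // undup_uniq.
  move=> y; rewrite mem_filter => /andP[/asboolP hc yY]; split => //.
  exact: (Ys_bound _ yY).1.
rewrite sum_const_R -cardE card_ffun card_ord.
by rewrite card_ord.
Qed.

Hypothesis C1 : C <= 1.
Hypothesis q1 : (1 <= q)%N.
Hypothesis Hq : 9 * Num.max 1 A <= q%:R.
Hypothesis HN : Num.max (4 / A)
    (8 * (n.+1)%:R * n%:R * 2 ^+ n * D * A ^+ n.-1 / (3 * C ^+ n)) <= N%:R.

Lemma main_bound : (count badb (enum F))%:R <= (M ^ n)%:R / (4 * (n.+1)%:R) :> R.
Proof.
have [C0 D0 _] := A2.
have [A0 _] := A1.
have HB := bad_count.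
have HY := Ys_size.
have HM : 0 <= (M ^ n)%:R / (4 * (n.+1)%:R) :> R by rewrite divr_ge0 // mulr_ge0.
case: (posnP n) => [n0|npos].
  have Hz : (n * T ^ n.-1 = 0)%N by rewrite n0.
  move: HB; rewrite Hz muln0 leqn0 => /eqP ->; done.
have HN' := HN; rewrite (esym (prednK npos)) /= in HN'.
have Hfa := @final_arith R n.-1 A C D q%:R N%:R K%:R T%:R A0 C0 C1 D0 Hq HN'.
rewrite (prednK npos) in Hfa.
apply: (@le_trans _ _ ((size Ys)%:R * (n%:R * (T ^ n.-1)%:R))).
  by rewrite -!natrM ler_nat.
apply: (@le_trans _ _ ((K ^ n)%:R * D * (n%:R * (T ^ n.-1)%:R))).
  by apply: ler_wpM2r => //; rewrite mulr_ge0.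
move: Hfa; rewrite !natrX natrM exprMn -!mulrA.
apply.
- exact: ler0n.
- have x0 : 0 <= (q%:R + A) / C.
    by apply: divr_ge0; [rewrite addr_ge0 // ?ler0n // ltW | exact: ltW].
  by rewrite -natr1 lerD2r truncn_le.
- exact: ler0n.
- have x0 : 0 <= A * N%:R by rewrite mulr_ge0 // ltW.
  rewrite -[(_.+2)%:R]natr1 -[(_.+1)%:R]natr1 -addrA lerD2r; first by rewrite truncn_le.
Qed.


Lemma gridpt_inj : injective (fun v : F => gridpt s v).
Proof.
move=> v w /= E; apply/ffunP => j; apply: val_inj.
have := congr1 (fun z : vec => z 0 j) E; rewrite /= !gridE => /addrI.
have N0 : (N%:R : R) != 0 by rewrite pnatr_eq0 -lt0n.
move/(congr1 (fun x => x * N%:R)); rewrite !divfK // => /eqP.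
by rewrite eqr_nat => /eqP.
Qed.

Lemma cardG_eq : cardG N q s = (M ^ n)%N.
Proof.
rewrite /cardG /Gseq undup_id; last first.
  by rewrite (map_inj_uniq gridpt_inj) enum_uniq.
by rewrite size_map -cardE card_ffun !card_ord.
Qed.

Lemma cardGout_eq :
  (cardG_out (Hbound B d fRep N) N q s + count badb (enum F) = M ^ n)%N.
Proof.
rewrite /cardG_out /Gseq undup_id; last first.
  by rewrite filter_uniq // (map_inj_uniq gridpt_inj) enum_uniq.
rewrite size_filter count_map.
rewrite (@eq_count _ _ (predC badb)); last first.
  by move=> v /=; rewrite /badb asbool_neg.
rewrite addnC count_predC -cardE card_ffun !card_ord.
by [].
Qed.

Lemma ratio_bound : 1 - (4 * (n.+1)%:R)^-1 <=
  ((cardG_out (Hbound B d fRep N) N q s)%:R / (cardG N q s)%:R :> R).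
Proof.
have HB := main_bound.
have E := cardGout_eq.
rewrite cardG_eq.
have M0 : (0 : R) < (M ^ n)%:R.
  by rewrite ltr0n expn_gt0 muln_gt0 N1 q1.
have -> : (cardG_out (Hbound B d fRep N) N q s)%:R = (M ^ n)%:R - (count badb (enum F))%:R :> R.
  by rewrite -E natrD addrK.
rewrite mulrBl divff ?gt_eqF //.
rewrite lerD2l lerN2 ler_pdivrMr //.
by rewrite mulrC.
Qed.

End Count.
End S.

Theorem corollary5p2 (R : realType) (n : nat) (X : finType) (B : 'M[R]_n)
    (d : X -> 'rV[R]_n) (fRep : set (X * 'rV[R]_n)) (A C D : R)
    (N q L : nat) (eps : R) (s : 'rV[R]_n) :
  is_infrastructure B d fRep ->
  cornered B d fRep ->
  assumptionA1 B d fRep A ->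
  assumptionA2 B d C D ->
  C <= 1 ->
  (1 <= N)%N -> (1 <= q)%N -> (1 <= L)%N ->
  0 < eps -> eps <= ((2 * N * L)%N%:R)^-1 ->
  9 * Num.max 1 A <= q%:R ->
  Num.max (4 / A)
    (8 * (n.+1)%:R * n%:R * 2 ^+ n * D * A ^+ n.-1 / (3 * C ^+ n)) <= N%:R ->
  (exists w : 'I_n -> 'I_L, s = (((N * L)%N)%:R)^-1 *: (\row_i ((w i : nat)%:R))) ->
  Hgrid B d fRep N eps `&` Gset N q s = set0 ->
  (N%:R)^-1 <= A / 4 /\
  1 - (4 * (n.+1)%:R)^-1 <= (
    (cardG_out (Hbound B d fRep N) N q s)%:R / (cardG N q s)%:R :> R).
Proof.
move=> infra corn A1 A2 C1 N1 q1 L1 e0 ee Hq HN _ _.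
split; last exact: (@ratio_bound _ _ _ _ _ _ infra corn A C D N q s N1 A1 A2 C1 q1 Hq HN).
have [A0 _] := A1.
move: HN; rewrite ge_max => /andP[H _].
have N0 : (0 : R) < N%:R by rewrite ltr0n.
move: H; rewrite ler_pdivrMr // => H.
rewrite -(ler_pM2r N0) mulVf ?gt_eqF //.
lra.
Qed.
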